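(* Let $ubav$ be a word with $|ub| = i$ and attributes $(x_i,y_i)=(x_{i+1},y_{i+1})$ satisfying $x_i + y_i = k+1$. Then $ubav \sim_k uabv$.
   Context: $A$ is a finite alphabet, $a,b\in A$, and $k\in\mathbb{N}$. Simon's congruence $u\sim_k v$ holds iff $u$ and $v$ have the same (scattered) subwords of length at most $k$. An $\mathsf{X}$-ranker is a nonempty word over $\{\mathsf{X}_a : a\in A\}$ (''go to the next $a$-position'', starting with the first $a$-position) and a $\mathsf{Y}$-ranker a nonempty word over $\{\mathsf{Y}_a : a\in A\}$ (''go to the previous $a$-position'', starting with the last $a$-position). The attribute of position $i$ is $(x_i,y_i)$, where $x_i$ (resp. $y_i$) is the length of a shortest $\mathsf{X}$-ranker (resp. $\mathsf{Y}$-ranker) reaching $i$. *)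

(* Defs.v *)
(* Words are sequences over a finite alphabet A;
   positions are 1-indexed: position q (1 <= q <= size w) carries letter nth _ w q.-1. *)
From mathcomp Require Import all_boot.
Set Implicit Arguments. Unset Strict Implicit. Unset Printing Implicit Defensive.

Section Rankers.
Variable A : eqType.

Definition simon (k : nat) (u v : seq A) : Prop :=
  forall s : seq A, size s <= k -> subseq s u = subseq s v.

(* X_a from position p (0 = before the word): the next a-position q > p. *)
Definition xstep (w : seq A) (a : A) (p : nat) : option nat :=
  let t := drop p w in
  let j := find (pred1 a) t in
  if j < size t then Some (p + j).+1 else None.

(* Y_a from position p (size w + 1 = after the word): previous a-position q < p. *)
Definition ystep (w : seq A) (a : A) (p : nat) : option nat :=
  let t := rev (take p.-1 w) in
  let j := find (pred1 a) t in
  if j < size t then Some (p.-1 - j) else None.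

Fixpoint run (step : A -> nat -> option nat) (r : seq A) (p : nat) : option nat :=
  match r with
  | [::] => Some p
  | c :: r' => match step c p with
               | Some q => run step r' q
               | None => None
               end
  end.

Definition xreaches (w : seq A) (r : seq A) (i : nat) : Prop :=
  0 < size r /\ run (xstep w) r 0 = Some i.

Definition yreaches (w : seq A) (r : seq A) (i : nat) : Prop :=
  0 < size r /\ run (ystep w) r (size w).+1 = Some i.

Definition is_xattr (w : seq A) (i n : nat) : Prop :=
  (exists r, xreaches w r i /\ size r = n) /\
  (forall r, xreaches w r i -> n <= size r).

Definition is_yattr (w : seq A) (i n : nat) : Prop :=
  (exists r, yreaches w r i /\ size r = n) /\
  (forall r, yreaches w r i -> n <= size r).

End Rankers.

(* Main.v *)
Require Import Defs.
From mathcomp Require Import all_boot.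
From mathcomp Require Import zify.
Set Implicit Arguments. Unset Strict Implicit. Unset Printing Implicit Defensive.

Section Aux.
Variable A : eqType.
Implicit Types (u v t s w W r : seq A) (a b c d x : A).

Lemma X1 x W c p : xstep (x :: W) c p.+1 = omap S (xstep W c p).
Proof. rewrite /xstep /=; case: ifP => //= _; by rewrite addSn. Qed.

Lemma X2 x W c : x == c -> xstep (x :: W) c 0 = Some 1.
Proof. by move=> /eqP ->; rewrite /xstep /= eqxx. Qed.

Lemma X3 x W c : x != c -> xstep (x :: W) c 0 = omap S (xstep W c 0).
Proof. by move=> /negbTE H; rewrite /xstep /= H drop0 ltnS; case: ifP. Qed.

Lemma R1 x W r p : run (xstep (x :: W)) r p.+1 = omap S (run (xstep W) r p).
Proof.
elim: r p => [|c r IH] p //=; rewrite X1; case: (xstep W c p) => //= q; exact: IH.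
Qed.

Lemma R0 x W d r : d != x ->
  run (xstep (x :: W)) (d :: r) 0 = omap S (run (xstep W) (d :: r) 0).
Proof.
move=> H /=; rewrite X3 1?eq_sym //; case: (xstep W d 0) => //= q; exact: R1.
Qed.

Lemma R0' x W d r : d == x ->
  run (xstep (x :: W)) (d :: r) 0 = omap S (run (xstep W) r 0).
Proof. move=> H /=; rewrite X2 1?eq_sym //; exact: R1. Qed.

Lemma core u t s c : subseq s u -> ~~ subseq (rcons s c) u ->
  run (xstep (u ++ c :: t)) (rcons s c) 0 = Some (size u).+1.
Proof.
elim: u s => [|x u IH] s.
  case: s => [|d s] //= _ _; by rewrite /xstep /= eqxx.
case: s => [|d s].
  move=> _; rewrite [rcons _ _]/= sub1seq in_cons negb_or => /andP [Hcx Hn].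
  rewrite [_ ++ _]/= R0 // (IH [::]) ?sub0seq //; by rewrite -[rcons _ _]/[:: c] sub1seq.
move=> Hs Hn; rewrite [rcons (d :: s) c]/= in Hn *; move: Hs Hn => /= Hs Hn.
case: (boolP (d == x)) => Hdx.
  rewrite Hdx in Hs Hn; change (run (xstep (x :: (u ++ c :: t))) (d :: rcons s c) 0 = Some (size u).+2).
  by rewrite R0' // IH.
rewrite (negbTE Hdx) in Hs Hn; change (run (xstep (x :: (u ++ c :: t))) (d :: rcons s c) 0 = Some (size u).+2).
by rewrite R0 // -rcons_cons IH.
Qed.

Lemma xstep_bound w c p q : xstep w c p = Some q -> 0 < q <= size w.
Proof. rewrite /xstep size_drop; case: ifP => // H [<-]; lia. Qed.

Lemma ystep_rev w c p : 0 < p <= (size w).+1 ->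
  ystep w c p = omap (fun q => (size w).+1 - q) (xstep (rev w) c ((size w).+1 - p)).
Proof.
move=> Hp; rewrite /ystep /xstep drop_rev size_rev.
have -> : size w - ((size w).+1 - p) = p.-1 by lia.
rewrite !size_rev; case: ifP => H //=; congr Some; lia.
Qed.

Lemma run_yrev w r p : 0 < p <= (size w).+1 ->
  run (ystep w) r p = omap (fun q => (size w).+1 - q) (run (xstep (rev w)) r ((size w).+1 - p)).
Proof.
elim: r p => [|c r IH] p Hp /=; first by congr Some; lia.
rewrite ystep_rev //; case E: (xstep (rev w) c ((size w).+1 - p)) => [q|] //=.
have := xstep_bound E; rewrite size_rev => Hq.
rewrite IH; last lia.
by have -> : (size w).+1 - ((size w).+1 - q) = q by lia.
Qed.

Lemma ycore t v s c : subseq s v -> ~~ subseq (c :: s) v ->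
  run (ystep (t ++ c :: v)) (rcons (rev s) c) (size (t ++ c :: v)).+1 = Some (size t).+1.
Proof.
move=> H1 H2; rewrite run_yrev; last lia.
rewrite subnn rev_cat rev_cons cat_rcons core //.
- by rewrite /= !size_cat /= size_rev; congr Some; lia.
- by rewrite subseq_rev.
- by rewrite -rev_cons subseq_rev.
Qed.

Lemma subseq_cat_split s l1 l2 : subseq s (l1 ++ l2) ->
  exists s1 s2, [/\ s = s1 ++ s2, subseq s1 l1 & subseq s2 l2].
Proof.
case/subseqP => m sz ->.
exists (mask (take (size l1) m) l1), (mask (drop (size l1) m) l2); split.
- rewrite -mask_cat ?cat_take_drop // size_take; rewrite size_cat in sz; rewrite sz; case: ifP => //; lia.
- exact: mask_subseq.
- exact: mask_subseq.
Qed.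

Lemma subseq1_cases s b : subseq s [:: b] -> s = [::] \/ s = [:: b].
Proof.
case: s => [|c [|e s]] H; first by left.
  by right; move: H; rewrite sub1seq inE => /eqP ->.
by have := size_subseq H.
Qed.

Lemma rcons_ne s u c d : c != d -> subseq (rcons s c) (rcons u d) -> subseq (rcons s c) u.
Proof.
move=> H; rewrite -[subseq _ (rcons u d)]subseq_rev -[subseq _ u]subseq_rev !rev_rcons /=.
by rewrite (negbTE H).
Qed.

Lemma swap_aux u v s a b : subseq s (u ++ b :: a :: v) ->
  (forall s1 s2, s = s1 ++ b :: a :: s2 -> subseq s1 u -> subseq s2 v ->
     ~~ subseq (rcons s1 b) u -> ~~ subseq (a :: s2) v -> False) ->
  subseq s (u ++ a :: b :: v).
Proof.
move=> /subseq_cat_split [s1 [r [-> Hs1]]].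
rewrite -[b :: a :: v]/([:: b] ++ [:: a] ++ v).
move=> /subseq_cat_split [r1 [r' [-> /subseq1_cases Hr1]]].
move=> /subseq_cat_split [r3 [s2 [-> /subseq1_cases Hr3 Hs2]]] Hf.
move: Hf; case: Hr1 => ->; case: Hr3 => -> Hf; rewrite /=.
- apply: cat_subseq => //.
  exact: subseq_trans Hs2 (subseq_trans (subseq_cons _ _) (subseq_cons _ _)).
- apply: cat_subseq => //.
  by rewrite /= eqxx; exact: subseq_trans Hs2 (subseq_cons _ _).
- apply: cat_subseq => //.
  have: subseq (b :: s2) (b :: v) by rewrite /= eqxx.
  by move/subseq_trans; apply; exact: subseq_cons.
- case: (boolP (subseq (rcons s1 b) u)) => H1.
    rewrite -cat_rcons; apply: cat_subseq => //=.
    by rewrite eqxx; exact: subseq_trans Hs2 (subseq_cons _ _).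
  case: (boolP (subseq (a :: s2) v)) => H2.
    apply: cat_subseq => //.
    have: subseq (b :: a :: s2) (b :: v) by rewrite /= eqxx.
    by move/subseq_trans; apply; exact: subseq_cons.
  by case: (Hf s1 s2).
Qed.
End Aux.

Theorem proposition11 (A : finType) (u v : seq A) (a b : A) (k i x y : nat) :
  i = size (u ++ [:: b]) ->
  is_xattr (u ++ b :: a :: v) i x ->
  is_yattr (u ++ b :: a :: v) i y ->
  is_xattr (u ++ b :: a :: v) i.+1 x ->
  is_yattr (u ++ b :: a :: v) i.+1 y ->
  x + y = k.+1 ->
  simon k (u ++ b :: a :: v) (u ++ a :: b :: v).
Proof.
have Ei : size (u ++ [:: b]) = (size u).+1 by rewrite size_cat addn1.
move=> -> [_ Hx1] [_ Hy1] [_ Hx2] [_ Hy2] Hxy s Hs.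
rewrite Ei in Hx1 Hy1 Hx2 Hy2.
case: (eqVneq a b) => [-> //|Hab].
apply/idP/idP => H.
- apply: (swap_aux H) => s1 s2 Es Hs1 Hs2 N1 N2.
  have L1 : x <= size (rcons s1 b).
    apply: Hx1; split; first by rewrite size_rcons.
    exact: core.
  have L2 : y <= size (rcons (rev s2) a).
    apply: Hy2; split; first by rewrite size_rcons.
    have := ycore (rcons u b) Hs2 N2.
    by rewrite cat_rcons size_rcons.
  move: Hs L1 L2; rewrite Es !size_cat !size_rcons /= size_rev; lia.
- apply: (swap_aux (a:=b) (b:=a) H) => s1 s2 Es Hs1 Hs2 N1 N2.
  have L1 : x <= size (rcons s1 a).
    apply: Hx2; split; first by rewrite size_rcons.
    have := @core _ (rcons u b) v s1 a (subseq_trans Hs1 (subseq_rcons u b)).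
    rewrite cat_rcons size_rcons; apply.
    by apply/negP => /(rcons_ne Hab); apply/negP.
  have L2 : y <= size (rcons (rev s2) b).
    apply: Hy1; split; first by rewrite size_rcons.
    have := @ycore _ u (a :: v) s2 b (subseq_trans Hs2 (subseq_cons v a)).
    apply; rewrite /= eq_sym (negbTE Hab) //.
  move: Hs L1 L2; rewrite Es !size_cat !size_rcons /= size_rev; lia.
Qed.
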